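(* Let $r\ge1$, let $\mathcal{A}:\mathbb{C}^{m\times n}\to\mathbb{C}^p$ be linear with $\delta_{4r}(\mathcal{A})\le0.04$, let $X_0\in\mathbb{C}^{m\times n}$ be arbitrary, let $\nu\in\mathbb{C}^p$ and $b=\mathcal{A}X_0+\nu$, and let $X_{0,r}$ be a best rank-$r$ approximation of $X_0$ in Frobenius norm. Then $b=\mathcal{A}X_{0,r}+\widetilde{\nu}$ where $$\|\widetilde{\nu}\|_2\le1.02\left[\|X_0-X_{0,r}\|_F+\frac1{\sqrt r}\|X_0-X_{0,r}\|_*\right]+\|\nu\|_2.$$
   Context: $\|\cdot\|_2$ is the Euclidean norm, $\|\cdot\|_F$ the Frobenius norm, $\|\cdot\|_*$ the nuclear norm. $\delta_s(\mathcal{A})$ is the smallest $\delta\ge0$ such that $(1-\delta)\|X\|_F^2\le\|\mathcal{A}X\|_2^2\le(1+\delta)\|X\|_F^2$ for all $X$ with $\mathrm{rank}(X)\le s$. *)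

(* Defs.v *)
(* Scalars: an arbitrary numClosedFieldType C (e.g. the complex numbers). *)
From HB Require Import structures.
From mathcomp Require Import all_boot all_order all_algebra.
From mathcomp Require Export sesquilinear spectral.
Set Implicit Arguments. Unset Strict Implicit. Unset Printing Implicit Defensive.
Import Order.TTheory GRing.Theory Num.Theory.
Local Open Scope ring_scope.
Local Open Scope sesquilinear_scope.

Definition norm2 {C : numClosedFieldType} {p : nat} (v : 'cV[C]_p) : C :=
  sqrtC (\sum_(i < p) `|v i 0| ^+ 2).

Definition frob {C : numClosedFieldType} {m n : nat} (X : 'M[C]_(m, n)) : C :=
  sqrtC (\sum_(i < m) \sum_(j < n) `|X i j| ^+ 2).

Definition gram_eigenvalues {C : numClosedFieldType} {m n : nat}
  (X : 'M[C]_(m, n)) : seq C :=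
  sval (closed_field_poly_normal (char_poly (X ^t* *m X))).

(* Nuclear norm = sum of the singular values, i.e. of the square roots of the
   eigenvalues of X^* X (extra zero singular values do not contribute). *)
Definition nuclear {C : numClosedFieldType} {m n : nat} (X : 'M[C]_(m, n)) : C :=
  \sum_(z <- gram_eigenvalues X) sqrtC z.

Definition rip_ineq {C : numClosedFieldType} {m n p : nat}
  (A : 'M[C]_(m, n) -> 'cV[C]_p) (s : nat) (delta : C) : Prop :=
  forall X : 'M[C]_(m, n), (\rank X <= s)%N ->
    (1 - delta) * frob X ^+ 2 <= norm2 (A X) ^+ 2 /\
    norm2 (A X) ^+ 2 <= (1 + delta) * frob X ^+ 2.

Definition rip_const {C : numClosedFieldType} {m n p : nat}
  (A : 'M[C]_(m, n) -> 'cV[C]_p) (s : nat) (delta : C) : Prop :=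
  [/\ 0 <= delta, rip_ineq A s delta &
      forall d, 0 <= d -> rip_ineq A s d -> delta <= d].

Definition best_rank_approx {C : numClosedFieldType} {m n : nat}
  (r : nat) (X Y : 'M[C]_(m, n)) : Prop :=
  (\rank Y <= r)%N /\
  forall Z : 'M[C]_(m, n), (\rank Z <= r)%N -> frob (X - Y) <= frob (X - Z).

(* Main.v *)
Require Import Defs.
From HB Require Import structures.
From mathcomp Require Import all_boot all_order all_algebra.
From mathcomp Require Import zify ring.
Import Order.TTheory GRing.Theory Num.Theory Num.Def.
Local Open Scope ring_scope.
Local Open Scope sesquilinear_scope.
Set Warnings "-notation-overridden,-ambiguous-paths".

Section S.
Variable C : numClosedFieldType.

Lemma norm2_dot p (v : 'cV[C]_p) : norm2 v = sqrtC (dotmx v^T v^T).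
Proof.
rewrite /norm2 dotmxE !mxE; congr sqrtC; apply: eq_bigr => i _.
by rewrite !mxE normCK.
Qed.

Lemma norm2_ge0 p (v : 'cV[C]_p) : 0 <= norm2 v.
Proof. by rewrite sqrtC_ge0 sumr_ge0 // => i _; rewrite exprn_ge0. Qed.

Lemma norm2D p (u v : 'cV[C]_p) : norm2 (u + v) <= norm2 u + norm2 v.
Proof. rewrite !norm2_dot linearD; exact: (triangle_lerif (@dotmx C p) u^T v^T). Qed.

Lemma frob_ge0 m n (X : 'M[C]_(m,n)) : 0 <= frob X.
Proof. by rewrite sqrtC_ge0 sumr_ge0 // => i _; rewrite sumr_ge0 // => j _; rewrite exprn_ge0. Qed.

Lemma frob_sq m n (X : 'M[C]_(m,n)) : frob X ^+ 2 = \tr (X^t* *m X).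
Proof.
rewrite /frob sqrtCK /mxtrace exchange_big; apply: eq_bigr => j _.
rewrite !mxE; apply: eq_bigr => i _; rewrite !mxE normCK mulrC //.
Qed.

Lemma le_sq_nneg (x y : C) : 0 <= x -> 0 <= y -> x ^+ 2 <= y ^+ 2 -> x <= y.
Proof. by move=> x0 y0; rewrite ler_sqr. Qed.

End S.
Arguments norm2_dot {C p} v.
Arguments norm2_ge0 {C p} v.
Arguments norm2D {C p} u v.
Arguments frob_ge0 {C m n} X.
Arguments frob_sq {C m n} X.
Arguments le_sq_nneg {C} x y.

Lemma char_poly_conj (R : comNzRingType) k (Q A M : 'M[R]_k) :
  M *m Q = 1%:M -> char_poly (Q *m A *m M) = char_poly A.
Proof.
move=> MQ; have QM := mulmx1C MQ.
rewrite /char_poly.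
have -> : char_poly_mx (Q *m A *m M) =
    map_mx polyC Q *m char_poly_mx A *m map_mx polyC M.
  rewrite /char_poly_mx mulmxBr mulmxBl -!map_mxM; congr (_ - _).
  by rewrite mul_mx_scalar -scalemxAl -map_mxM QM map_mx1 scalemx1.
by rewrite !det_mulmx mulrAC -det_mulmx -map_mxM QM map_mx1 det1 mul1r.
Qed.

Lemma char_poly_diag (R : comNzRingType) k (D : 'rV[R]_k) :
  char_poly (diag_mx D) = \prod_(j < k) ('X - (D 0 j)%:P).
Proof.
rewrite char_poly_trig; first by apply: eq_bigr => j _; rewrite mxE eqxx.
by apply/is_trig_mxP => i j lt_ij; rewrite mxE -val_eqE /= (ltn_eqF lt_ij) mulr0n.
Qed.

Section Sp.
Variables (C : numClosedFieldType) (m n : nat) (E : 'M[C]_(m, n)).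

Let G := E^t* *m E.
Let P := spectralmx G.
Let d := spectral_diag G.

Lemma G_normal : G \is normalmx.
Proof.
apply/normalmxP.
have -> : G^t* = G by rewrite /G trmx_mul map_mxM trmxCK.
by [].
Qed.

Lemma PPt : P *m P^t* = 1%:M.
Proof. exact/unitarymxP/spectral_unitarymx. Qed.

Lemma PtP : P^t* *m P = 1%:M.
Proof. exact: mulmx1C PPt. Qed.

Lemma G_eq : G = P^t* *m diag_mx d *m P.
Proof.
have := orthomx_spectralP G_normal; rewrite invmx_unitary ?spectral_unitarymx //.
Qed.

Lemma PGPt : P *m G *m P^t* = diag_mx d.
Proof.
by rewrite G_eq !mulmxA PPt mul1mx -mulmxA PPt mulmx1.
Qed.

Definition mask (S : {set 'I_n}) : 'M[C]_n := diag_mx (\row_j ((j \in S)%:R : C)).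
Definition ES (S : {set 'I_n}) := E *m P^t* *m mask S *m P.

Lemma ES_setT : ES setT = E.
Proof.
rewrite /ES; have -> : mask setT = 1%:M.
  by apply/matrixP => i j; rewrite !mxE in_setT.
by rewrite mulmx1 -mulmxA PtP mulmx1.
Qed.

Lemma ES_split (T S : {set 'I_n}) : T \subset S -> ES S = ES T + ES (S :\: T).
Proof.
move=> TS; rewrite /ES.
have -> : mask S = mask T + mask (S :\: T).
  apply/matrixP => i j; rewrite !mxE in_setD.
  case: (i == j); rewrite ?mulr1n ?mulr0n ?addr0 //.
  case iT: (i \in T); case iS: (i \in S) => //=; rewrite ?addr0 ?add0r //.
  by move: (subsetP TS i iT); rewrite iS.
by rewrite mulmxDr mulmxDl.
Qed.

Lemma mask_sum S : mask S = \sum_(j in S) delta_mx j j.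
Proof.
apply/matrixP => i k; rewrite summxE !mxE.
case: (i =P k) => [ik|ne].
  rewrite -ik /=; case iS: (i \in S) => /=.
    rewrite (bigD1 i) //= !mxE !eqxx big1 ?addr0 // => j /andP[_ ji].
    by rewrite mxE eq_sym (negPf ji).
  rewrite big1 // => j jS; rewrite mxE; case: (i =P j) => [ij|] //=.
  by move: iS; rewrite ij jS.
rewrite /= big1 // => j _; rewrite mxE.
by case: (i =P j) => [ij|] //=; case: (k =P j) => [kj|] //; case: ne; rewrite ij kj.
Qed.

Lemma ES_rank S : (\rank (ES S) <= #|S|)%N.
Proof.
apply: leq_trans (mxrankM_maxl _ _) _.
apply: leq_trans (mxrankM_maxr _ _) _.
rewrite mask_sum -sum1_card.
apply: (big_ind2 (fun (M : 'M[C]_n) k => (\rank M <= k)%N)).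
- by rewrite mxrank0.
- move=> A1 k1 A2 k2 h1 h2; apply: leq_trans (mxrank_add _ _) _; exact: leq_add.
- by move=> j _; rewrite mxrank_delta.
Qed.

Lemma ES_frob S : frob (ES S) ^+ 2 = \sum_(j in S) d 0 j.
Proof.
rewrite frob_sq.
have mt : (mask S)^t* = mask S.
  by rewrite /mask tr_diag_mx map_diag_mx; congr diag_mx; apply/rowP => j; rewrite !mxE rmorph_nat.
have -> : (ES S)^t* *m ES S = P^t* *m (mask S *m diag_mx d *m mask S) *m P.
  by rewrite -PGPt /ES !trmx_mul !map_mxM trmxCK mt /G !mulmxA.
rewrite mxtrace_mulC (mulmxA P) PPt mul1mx !mulmx_diag mxtrace_diag [RHS]big_mkcond /=.
by apply: eq_bigr => j _; rewrite !mxE; case: (j \in S); rewrite ?mul1r ?mulr1 ?mul0r.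
Qed.

Lemma d_ge0 j : 0 <= d 0 j.
Proof. by have := ES_frob [set j]; rewrite big_set1 => <-; rewrite exprn_ge0 ?frob_ge0. Qed.

Lemma frobE : frob E ^+ 2 = \sum_j d 0 j.
Proof. by have := ES_frob setT; rewrite ES_setT => ->; apply: eq_bigl => j; rewrite in_setT. Qed.

Lemma nuclearE : nuclear E = \sum_j sqrtC (d 0 j).
Proof.
rewrite /nuclear /gram_eigenvalues; case: closed_field_poly_normal => s /= hs.
have cp : char_poly G = \prod_(j < n) ('X - (d 0 j)%:P).
  by rewrite {1}G_eq char_poly_conj ?PPt // char_poly_diag.
have : perm_eq s [seq d 0 j | j <- enum 'I_n].
  apply: prod_XsubC_eq; rewrite big_map big_enum /= -cp.
  by rewrite [in RHS]hs (monicP (char_poly_monic _)) scale1r.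
move=> ps; rewrite (perm_big _ ps) big_map big_enum. by [].
Qed.
End Sp.
Arguments ES {C m n} E S.
Arguments ES_frob {C m n} E S.
Arguments ES_rank {C m n} E S.
Arguments ES_split {C m n} E T S.
Arguments ES_setT {C m n} E.
Arguments d_ge0 {C m n} E j.
Arguments frobE {C m n} E.
Arguments nuclearE {C m n} E.

Lemma argmax_cons (C : numClosedFieldType) (I : eqType) (f : I -> C) (a : I) (s : seq I) :
  (forall j, f j \is Num.real) ->
  exists2 x, x \in a :: s & forall y, y \in a :: s -> f y <= f x.
Proof.
move=> fr; elim: s a => [|b s IH] a.
  by exists a; rewrite ?inE // => y; rewrite inE => /eqP ->.
have [x xs hx] := IH b.
case/orP: (real_leVge (fr a) (fr x)) => h.
  exists x; first by rewrite inE xs orbT.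
  by move=> y; rewrite inE => /orP[/eqP->|/hx].
exists a; first by rewrite inE eqxx.
by move=> y; rewrite inE => /orP[/eqP->//|/hx/le_trans]; apply.
Qed.

Lemma argmax_set (C : numClosedFieldType) k (f : 'I_k -> C) (U : {set 'I_k}) :
  (forall j, f j \is Num.real) -> U != set0 ->
  exists2 x, x \in U & forall y, y \in U -> f y <= f x.
Proof.
move=> fr /set0Pn [x0 x0U].
have : x0 \in enum U by rewrite mem_enum.
case: (enum U) (mem_enum U) => // a s hs _.
have [x xs hx] := @argmax_cons _ _ f a s fr.
exists x; first by rewrite -hs.
by move=> y yU; apply: hx; rewrite hs.
Qed.

Section An.
Variables (C : numClosedFieldType) (m n p : nat).
Variable (A : {linear 'M[C]_(m, n) -> 'cV[C]_p}).
Variable (E : 'M[C]_(m, n)).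
Variables (r : nat) (r1 : (0 < r)%N) (c : C) (c0 : 0 <= c).
Hypothesis HA : forall B : 'M[C]_(m, n), (\rank B <= r)%N -> norm2 (A B) <= c * frob B.

Let d j := spectral_diag (E^t* *m E) 0 j.
Let k := (sqrtC (r%:R : C))^-1.

Lemma d0 j : 0 <= d j. Proof. exact: d_ge0. Qed.

Lemma top_set (S : {set 'I_n}) (t : nat) : (t <= #|S|)%N ->
  exists T : {set 'I_n}, [/\ T \subset S, #|T| = t &
    forall x y, x \in T -> y \in S :\: T -> d y <= d x].
Proof.
elim: t => [|t IH] ht.
  by exists set0; split; [apply: sub0set | apply: cards0 | move=> x y; rewrite inE].
have [T [TS cT top]] := IH (ltnW ht).
have ne : S :\: T != set0.
  by rewrite -cards_eq0 cardsD (setIidPr TS) cT subn_eq0 -ltnNge.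
have [x xR xmax] := @argmax_set _ _ d _ (fun j => ger0_real (d0 j)) ne.
move: (xR); rewrite in_setD => /andP[xT xS].
exists (x |: T); split.
- by rewrite subUset sub1set xS TS.
- by rewrite cardsU1 xT cT.
move=> u v; rewrite in_setU1 => /orP[/eqP->|uT] vR.
  apply: xmax; move: vR; rewrite !in_setD in_setU1 negb_or => /andP[/andP[_ ->] ->] //.
apply: top => //; move: vR; rewrite !in_setD in_setU1 negb_or => /andP[/andP[_ ->] ->] //.
Qed.

Lemma sqrtr_gt0 : 0 < sqrtC (r%:R : C).
Proof. by rewrite sqrtC_gt0 ltr0n. Qed.

Lemma k_ge0 : 0 <= k.
Proof. by rewrite invr_ge0 ltW // sqrtr_gt0. Qed.

Lemma block_bound (S : {set 'I_n}) lam : 0 <= lam -> (#|S| <= r)%N ->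
  (forall j, j \in S -> d j <= lam) -> norm2 (A (ES E S)) <= c * sqrtC (r%:R * lam).
Proof.
move=> l0 hS hl.
apply: le_trans (HA _ (leq_trans (ES_rank E S) hS)) _.
apply: (ler_wpM2l c0).
rewrite -(sqrCK (frob_ge0 _)) ES_frob ler_sqrtC ?nnegrE ?mulr_ge0 ?ler0n ?sumr_ge0 //;
  last by move=> j _; apply: d0.
apply: le_trans (ler_sum _ hl) _.
rewrite sumr_const mulrC mulr_natr.
by rewrite ler_wpMn2l.
Qed.

Lemma tail (S T : {set 'I_n}) : T \subset S -> #|T| = r ->
  (forall x y, x \in T -> y \in S :\: T -> d y <= d x) ->
  exists mu, [/\ 0 <= mu, forall j, j \in S :\: T -> d j <= mu &
    sqrtC (r%:R * mu) <= k * \sum_(t in T) sqrtC (d t)].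
Proof.
move=> TS cT top.
have ne : T != set0 by rewrite -cards_eq0 cT -lt0n.
have fr : forall j, - d j \is Num.real by move=> j; rewrite rpredN ger0_real ?d0.
have [t0 t0T hmin] := @argmax_set _ _ (fun j => - d j) _ fr ne.
exists (d t0); split; first exact: d0.
  by move=> j jR; apply: top.
have -> : \sum_(t in T) sqrtC (d t) = sqrtC (d t0) *+ r + \sum_(t in T) (sqrtC (d t) - sqrtC (d t0)).
  by rewrite big_split /= sumr_const cT mulNrn addrCA subrr addr0.
rewrite mulrDr sqrtCM ?nnegrE ?ler0n ?d0 //.
have -> : k * (sqrtC (d t0) *+ r) = sqrtC r%:R * sqrtC (d t0).
  rewrite -[sqrtC (d t0) *+ r]mulr_natl -{1}(sqrtCK (r%:R : C)) expr2 !mulrA /k mulVf ?mul1r //.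
  by rewrite gt_eqF // sqrtr_gt0.
rewrite lerDl mulr_ge0 ?k_ge0 // sumr_ge0 // => t tT.
rewrite subr_ge0 ler_sqrtC ?nnegrE ?d0 //.
by rewrite -lerN2; apply: hmin.
Qed.

Lemma Qbound (S : {set 'I_n}) lam : 0 <= lam -> (forall j, j \in S -> d j <= lam) ->
  norm2 (A (ES E S)) <= c * (sqrtC (r%:R * lam) + k * \sum_(j in S) sqrtC (d j)).
Proof.
have [N] := ubnP #|S|; elim: N S lam => // N IH S lam hN l0 hl.
case: (leqP #|S| r) => h.
  apply: le_trans (block_bound _ _ l0 h hl) _.
  apply: (ler_wpM2l c0); rewrite lerDl mulr_ge0 ?k_ge0 // sumr_ge0 // => j _.
  by rewrite sqrtC_ge0 d0.
have [T [TS cT top]] := top_set _ _ (ltnW h).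
have [mu [mu0 hmu hk]] := tail _ _ TS cT top.
rewrite (ES_split E _ _ TS) linearD /=.
apply: le_trans (norm2D _ _) _.
have hR : (#|S :\: T| < N)%N.
  rewrite cardsD (setIidPr TS) cT; move: hN h r1; lia.
apply: le_trans (lerD (block_bound _ _ l0 (eq_leq cT) (fun j jT => hl j (subsetP TS j jT)))
                      (IH _ _ hR mu0 hmu)) _.
rewrite -mulrDr; apply: (ler_wpM2l c0).
rewrite lerD2l (big_setID (A:=S) T) /= (setIidPr TS) mulrDr lerD2r; exact: hk.
Qed.

Lemma main_bound : norm2 (A E) <= c * (frob E + k * nuclear E).
Proof.
rewrite nuclearE -/d.
have hsum : \sum_j sqrtC (d j) = \sum_(j in [set: 'I_n]) sqrtC (d j).
  by apply: eq_bigl => j; rewrite in_setT.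
case: (leqP #|[set: 'I_n]| r) => h.
  rewrite -{1}(ES_setT E); apply: le_trans (HA _ (leq_trans (ES_rank E _) h)) _.
  rewrite ES_setT; apply: (ler_wpM2l c0); rewrite lerDl mulr_ge0 ?k_ge0 // sumr_ge0 // => j _.
  by rewrite sqrtC_ge0 d0.
have [T [TS cT top]] := top_set _ _ (ltnW h).
have [mu [mu0 hmu hk]] := tail _ _ TS cT top.
rewrite -{1}(ES_setT E) (ES_split E _ _ TS) linearD /=.
apply: le_trans (norm2D _ _) _.
have h1 : norm2 (A (ES E T)) <= c * frob E.
  apply: le_trans (HA _ (leq_trans (ES_rank E _) (eq_leq cT))) _.
  apply: (ler_wpM2l c0); apply: le_sq_nneg; rewrite ?frob_ge0 //.
  have hs2 : \sum_j d j = \sum_(j in [set: 'I_n]) d j.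
    by apply: eq_bigl => j; rewrite in_setT.
  rewrite ES_frob frobE -/d hs2.
  rewrite (big_setID (A:=[set: 'I_n]) T) /= (setIidPr TS) lerDl sumr_ge0 // => j _; exact: d0.
apply: le_trans (lerD h1 (Qbound _ _ mu0 hmu)) _.
rewrite -mulrDr; apply: (ler_wpM2l c0).
rewrite lerD2l hsum (big_setID (A:=[set: 'I_n]) T) /= (setIidPr TS) mulrDr lerD2r; exact: hk.
Qed.
End An.

Lemma numc (C : numClosedFieldType) : 1 + 4%:R / 100%:R <= (102%:R / 100%:R : C) ^+ 2.
Proof.
rewrite -subr_ge0.
have -> : (102%:R / 100%:R : C) ^+ 2 - (1 + 4%:R / 100%:R) = 4%:R / 10000%:R.
  by field.
by apply: divr_ge0; apply: ler0n.
Qed.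

Theorem lemma5 (C : numClosedFieldType) (m n p r : nat)
  (A : {linear 'M[C]_(m, n) -> 'cV[C]_p})
  (X0 X0r : 'M[C]_(m, n)) (nu b : 'cV[C]_p) :
  (1 <= r)%N ->
  (exists delta, rip_const A (4 * r) delta /\ delta <= 4%:R / 100%:R) ->
  b = A X0 + nu ->
  best_rank_approx r X0 X0r ->
  exists nut : 'cV[C]_p,
    b = A X0r + nut /\
    norm2 nut <= 102%:R / 100%:R *
      (frob (X0 - X0r) + (sqrtC (r%:R))^-1 * nuclear (X0 - X0r)) + norm2 nu.
Proof.
move=> r1 [delta [[dl0 hrip _] dle]] hb _.
set c : C := 102%:R / 100%:R.
have c0 : 0 <= c by rewrite divr_ge0 ?ler0n.
have HA : forall B : 'M[C]_(m, n), (\rank B <= r)%N -> norm2 (A B) <= c * frob B.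
  move=> B hB.
  have [_ h2] := hrip B (leq_trans hB (leq_pmull r (isT : (0 < 4)%N))).
  apply: le_sq_nneg; [exact: norm2_ge0 | exact: mulr_ge0 c0 (frob_ge0 _) |].
  apply: le_trans h2 _; rewrite exprMn; apply: ler_wpM2r; first by rewrite exprn_ge0 ?frob_ge0.
  apply: le_trans (numc C); by rewrite lerD2l.
exists (A (X0 - X0r) + nu); split.
  by rewrite hb linearB addrA [A X0r + _]addrC subrK.
apply: le_trans (norm2D _ _) _; rewrite lerD2r.
exact: (@main_bound _ _ _ _ A (X0 - X0r) r r1 c c0 HA).
Qed.
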